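(* Let $\succ=(\succ_s)_{s\in S}$ be a priority profile with every $\succ_s$ a partial order on $I$, and let $\mu_1,\dots,\mu_K$ ($K\ge1$) be stable matchings for $\succ$ such that $\mu_{k'}$ Pareto dominates $\mu_k$ for all $1\le k<k'\le K$. For each $k$ and $s\in S$ let $A_s^k=\{(i,j)\in I\times I:\ \mu_k(i)=s\ \text{and}\ sP_j\mu_k(j)\}$, and let $\succ'_s=\succ_s\cup\bigcup_{k=1}^K A_s^k$. Then for every $s\in S$, $\succ'_s$ is asymmetric and acyclic.
   Context: A binary relation $B$ on $X$ is asymmetric if $(x,y)\in B$ implies $(y,x)\notin B$; transitive if $(x,y),(y,z)\in B$ imply $(x,z)\in B$; acyclic if for all $K\ge2$ and $x_0,\dots,x_K\in X$, [$(x_{k-1},x_k)\in B$ and $(x_k,x_{k-1})\notin B$ for all $k$] implies $(x_K,x_0)\notin B$. A partial order is an asymmetric transitive relation. School choice setup: $I$ is a finite set of students with $|I|\ge 3$, $S$ a finite set of schools. Each student $i$ has a total order $P_i$ on $S\cup\{\emptyset\}$; $sR_is'$ means $sP_is'$ or $s=s'$. Each school $s$ has capacity $q_s\in\mathbb{Z}_{++}$ and an asymmetric priority relation $\succ_s$ on $I$. A matching $\mu$ assigns each $i$ to $\mu(i)\in S\cup\{\emptyset\}$, $\mu(s)=\{i:\mu(i)=s\}$, $|\mu(s)|\le q_s$. $\mu$ is stable for $\succ$ if it is individually rational ($\mu(i)R_i\emptyset$ for all $i$), non-wasteful ($sP_i\mu(i)$ implies $|\mu(s)|=q_s$) and fair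 (no $s$, $j\in\mu(s)$, $i\notin\mu(s)$ with $sR_i\mu(i)$ and $(i,j)\in\succ_s$). $\mu$ is Pareto dominated by $\mu'$ if $\mu'(i)R_i\mu(i)$ for all $i$ and $\mu'(i)P_i\mu(i)$ for some $i$. *)

(* Defs.v *)
From mathcomp Require Import all_boot.
Set Implicit Arguments. Unset Strict Implicit. Unset Printing Implicit Defensive.

Definition asymmetric (X : Type) (B : rel X) : Prop :=
  forall x y, B x y -> ~~ B y x.
Definition transitive_rel (X : Type) (B : rel X) : Prop :=
  forall x y z, B x y -> B y z -> B x z.
Definition acyclic (X : Type) (B : rel X) : Prop :=
  forall (K : nat) (x : nat -> X), 2 <= K ->
    (forall k, 1 <= k <= K -> B (x k.-1) (x k) && ~~ B (x k) (x k.-1)) ->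
    ~~ B (x K) (x 0).
Definition partial_order (X : Type) (B : rel X) : Prop :=
  asymmetric B /\ transitive_rel B.

(* Outcomes: [Some s] = school s, [None] = the outside option (emptyset). *)
Definition strict_total_order (X : eqType) (P : rel X) : Prop :=
  irreflexive P /\ transitive_rel P /\ (forall x y, x != y -> P x y || P y x).

Section SchoolChoice.
Variables (I S : finType).
Variable P : I -> rel (option S).
Variable q : S -> nat.

Definition R (i : I) (a b : option S) : bool := P i a b || (a == b).

Definition assigned (mu : I -> option S) (s : S) : {set I} :=
  [set i | mu i == Some s].

Definition is_matching (mu : I -> option S) : Prop :=
  forall s, #|assigned mu s| <= q s.

Definition individually_rational (mu : I -> option S) : Prop :=
  forall i, R i (mu i) None.

Definition non_wasteful (mu : I -> option S) : Prop :=
  forall i s, P i (Some s) (mu i) -> #|assigned mu s| = q s.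

Definition fair (prio : S -> rel I) (mu : I -> option S) : Prop :=
  ~ (exists s i j, [/\ j \in assigned mu s, i \notin assigned mu s,
                       R i (Some s) (mu i) & prio s i j]).

Definition stable (prio : S -> rel I) (mu : I -> option S) : Prop :=
  [/\ is_matching mu, individually_rational mu, non_wasteful mu & fair prio mu].

Definition pareto_dominated (mu mu' : I -> option S) : Prop :=
  (forall i, R i (mu' i) (mu i)) /\ (exists i, P i (mu' i) (mu i)).

Definition A_rel (mu : I -> option S) (s : S) : rel I :=
  fun i j => (mu i == Some s) && P j (Some s) (mu j).

Definition extended_priority (K : nat) (prio : S -> rel I)
    (mus : 'I_K -> I -> option S) (s : S) : rel I :=
  fun i j => prio s i j || [exists k : 'I_K, A_rel (mus k) s i j].

End SchoolChoice.

(* Main.v *)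
Require Import Defs.
From mathcomp Require Import all_boot.

Theorem lemma2 (I S : finType) (P : I -> rel (option S)) (q : S -> nat)
  (prio : S -> rel I) (K : nat) (mus : 'I_K -> I -> option S) :
  3 <= #|I| ->
  (forall i, strict_total_order (P i)) ->
  (forall s, 0 < q s) ->
  (forall s, partial_order (prio s)) ->
  0 < K ->
  (forall k, stable P q prio (mus k)) ->
  (forall k k' : 'I_K, k < k' -> pareto_dominated P (mus k) (mus k')) ->
  forall s, asymmetric (extended_priority P prio mus s) /\
            acyclic (extended_priority P prio mus s).
Proof.
move=> _ Hsto _ Hpo _ Hst Hpar s.
have Pirr i x : P i x x = false by case: (Hsto i) => H _; exact: H.
have Ptr i x y z : P i x y -> P i y z -> P i x z.
  by case: (Hsto i) => _ [H _]; exact: H.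
have Ptot i x y : x != y -> P i x y || P i y x by case: (Hsto i) => _ [_ H]; exact: H.
have Rtr i x y z : R P i x y -> R P i y z -> R P i x z.
  rewrite /R => /orP[H1|/eqP->] /orP[H2|/eqP<-]; rewrite ?H1 ?H2 //.
  + by rewrite (Ptr _ _ _ _ H1 H2).
  + by rewrite eqxx orbT.
have PRfalse i x y : P i x y -> R P i y x -> False.
  move=> H1 /orP[H2|/eqP E]; last by subst; rewrite Pirr in H1.
  by have := Ptr _ _ _ _ H1 H2; rewrite Pirr.
have notR_P i x y : ~~ R P i x y -> P i y x.
  rewrite /R negb_or => /andP[H1 H2].
  by move: (Ptot i x y H2); rewrite (negbTE H1).
have prirr a : prio s a a = false.
  apply/negP=> H; case: (Hpo s) => Has _; by move: (Has _ _ H); rewrite H.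
have prtr a b c : prio s a b -> prio s b c -> prio s a c.
  by case: (Hpo s) => _ H; exact: H.
have Rrefl i x : R P i x x by rewrite /R eqxx orbT.
have mono (k k' : 'I_K) v : k <= k' -> R P v (mus k' v) (mus k v).
  rewrite leq_eqVlt => /orP[/eqP E|lt]; last by case: (Hpar _ _ lt) => H _; exact: H.
  by have -> : k' = k by apply: val_inj.
pose t v := \max_(k : 'I_K | [forall k0 : 'I_K, (k0 <= k) ==> P v (Some s) (mus k0 v)]) k.+1.
have T1 v (k : 'I_K) : R P v (mus k v) (Some s) -> t v <= k.
  move=> HR; apply/bigmax_leqP => k' /forallP Hk'.
  rewrite ltnNge; apply/negP => Hle.
  by move: (implyP (Hk' k) Hle) => HP; apply: (PRfalse _ _ _ HP HR).
have T2 v (k : 'I_K) : P v (Some s) (mus k v) -> k < t v.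
  move=> HP; apply: (@leq_bigmax_cond _ _ (fun k : 'I_K => k.+1) k).
  apply/forallP => k0; apply/implyP => Hle.
  case/orP: (mono k0 k v Hle) => [H|/eqP E]; last by rewrite -E.
  exact: (Ptr _ _ _ _ HP H).
pose h v := \max_(c | (c == v) || prio s c v) t c.
pose C a b := (h a < h b) || ((h a == h b) && prio s a b).
have edge a b : extended_priority P prio mus s a b -> C a b.
  case/orP => [Hp | /existsP [k /andP [/eqP Ha Hb]]].
  - have Hle : h a <= h b.
      apply/bigmax_leqP => c Hc; apply: leq_bigmax_cond.
      case/orP: Hc => [/eqP ->|Hc]; first by rewrite Hp orbT.
      by rewrite (prtr _ _ _ Hc Hp) orbT.
    rewrite /C Hp andbT; case: ltngtP Hle => //.
  - have Hha : h a <= k.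
      apply/bigmax_leqP => c Hc; apply: T1.
      case/orP: Hc => [/eqP ->|Hc]; first by rewrite Ha Rrefl.
      case: (Hst k) => _ _ _ Hfair.
      case Hcs: (mus k c == Some s); first by rewrite (eqP Hcs) Rrefl.
      case HRc: (R P c (Some s) (mus k c)).
        exfalso; apply: Hfair; exists s, c, a; split.
        * by rewrite inE Ha.
        * by rewrite inE Hcs.
        * exact: HRc.
        * exact: Hc.
      by rewrite /R (notR_P _ _ _ (negbT HRc)).
    have Htb : t b <= h b by apply: (@leq_bigmax_cond _ _ t b); rewrite eqxx.
    by rewrite /C (leq_ltn_trans Hha (leq_trans (T2 _ _ Hb) Htb)).
have Ctr a b c : C a b -> C b c -> C a c.
  rewrite /C => /orP[H1|/andP[/eqP E1 P1]] /orP[H2|/andP[/eqP E2 P2]].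
  + by rewrite (ltn_trans H1 H2).
  + by rewrite -E2 H1.
  + by rewrite E1 H2.
  + by rewrite E1 E2 eqxx (prtr _ _ _ P1 P2) orbT.
have Cirr a : C a a = false by rewrite /C ltnn eqxx prirr.
split.
  move=> a b Hab; apply/negP => Hba.
  by move: (Ctr _ _ _ (edge _ _ Hab) (edge _ _ Hba)); rewrite Cirr.
move=> n x Hn Hch; apply/negP => Hback.
have Hall m : 1 <= m <= n -> C (x 0) (x m).
  elim: m => // m IH /andP[_ Hm].
  have Hk : 1 <= m.+1 <= n by rewrite Hm.
  have Hedge := edge _ _ (andP (Hch m.+1 Hk)).1.
  case: m IH Hm Hk Hedge => [|m] IH Hm Hk Hedge //=.
  apply: Ctr (IH _) Hedge; by rewrite /= (ltnW Hm).
have Hn1 : 1 <= n <= n by rewrite leqnn (leq_trans _ Hn).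
by have := Ctr _ _ _ (Hall n Hn1) (edge _ _ Hback); rewrite Cirr.
Qed.
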